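(* Let $\Pi$ be a finite, satisfiable set of linear constraints over $x_1,\dots,x_D$ and $\mathrm{CL}$ the constraint layer built from $\Pi$ and the ordering $x_1,\dots,x_D$. Then for every $\tilde x\in\mathbb{R}^D$ and every $i=1,\dots,D$ we have $ub_i\ge lb_i$, and moreover $\mathrm{CL}(\tilde x)_i=\min^i(\max^i(\tilde x_i,lb_i),ub_i)=\max^i(\min^i(\tilde x_i,ub_i),lb_i)$.
   Context: A constraint is a linear inequality $\phi:\ \sum_{k=1}^D w_k x_k + b \unrhd 0$ with $w_k,b\in\mathbb{R}$ and $\unrhd\in\{\ge,>\}$; it is strict if $\unrhd$ is $>$. A point $\tilde x\in\mathbb{R}^D$ satisfies $\phi$ if $\sum_k w_k\tilde x_k+b\unrhd 0$, and satisfies a set $\Pi$ if it satisfies every member; $\Pi$ is satisfiable if some point satisfies it. Variable $x_j$ appears positively (resp. negatively) in $\phi$ if $w_j>0$ (resp. $w_j<0$). For a set $\Gamma$ of constraints, $\Gamma^+_j$ (resp. $\Gamma^-_j$) is the subset in which $x_j$ appears positively (resp. negatively). Reduction: for $\phi^1=\sum_k w^1_kx_k+b^1\unrhd^1 0\in\Gamma^-_j$ and $\phi^2=\sum_k w^2_kx_k+b^2\unrhd^2 0\in\Gamma^+_j$, $red_j(\phi^1,\phi^2)$ is $\sum_{k\ne j}(w^1_k|w^2_j|+w^2_k|w^1_j|)x_k + b^1|w^2_j|+b^2|w^1_j| \unrhd 0$, where $\unrhd$ is $\ge$ if both $\unrhd^1,\unrhd^2$ are $\ge$, and $>$ otherwise.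 Sets $\Pi_i$: $\Pi_D=\Pi$, and for $i<D$, with $j=i+1$, $\Pi_i=(\Pi_j\setminus(\Pi^-_j\cup\Pi^+_j))\cup\{red_j(\phi^1,\phi^2):\phi^1\in\Pi^-_j,\phi^2\in\Pi^+_j\}$, where $\Pi^\pm_j$ means $(\Pi_j)^\pm_j$. (Thus only $x_1,\dots,x_i$ occur in $\Pi_i$; we write $\Pi_i^\pm$ for $(\Pi_i)^\pm_i$.) For $\phi=\sum_kw_kx_k+b\unrhd0$ with $w_i\neq0$, let $\varepsilon^\phi_i=-\sum_{k\ne i}(w_k/w_i)x_k-b/w_i$; for $\phi\in\Pi_i$ it depends only on $x_1,\dots,x_{i-1}$. Constraint layer: given $\tilde x\in\mathbb{R}^D$, $\mathrm{CL}(\tilde x)\in\mathbb{R}^D$ is computed coordinatewise for $i=1,\dots,D$. Let $\varepsilon^\phi_i(\mathrm{CL}(\tilde x))$ denote $\varepsilon^\phi_i$ evaluated at the already computed values $\mathrm{CL}(\tilde x)_1,\dots,\mathrm{CL}(\tilde x)_{i-1}$, and set $ub_i=\min\{\varepsilon^\phi_i(\mathrm{CL}(\tilde x)):\phi\in\Pi_i^-\}$, $lb_i=\max\{\varepsilon^\phi_i(\mathrm{CL}(\tilde x)):\phi\in\Pi_i^+\}$ (with $\min\emptyset=+\infty$, $\max\emptyset=-\infty$). Then $\mathrm{CL}(\tilde x)_i=\min^i(\max^i(\tilde x_i,lb_i),ub_i)$, where $\max^i(a,lb_i)$ equals $v=\max(a,lb_i)$ unless some strict $\phi\in\Pi_i^+$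 has $v=\varepsilon^\phi_i(\mathrm{CL}(\tilde x))$, in which case it equals $v+\epsilon$ for a chosen $\epsilon>0$ small enough that $lb_i+\epsilon< ub_i$; symmetrically $\min^i(a,ub_i)$ equals $u=\min(a,ub_i)$ unless some strict $\phi\in\Pi_i^-$ has $u=\varepsilon^\phi_i(\mathrm{CL}(\tilde x))$, in which case it equals $u-\epsilon$ for a chosen $\epsilon>0$ small enough that $ub_i-\epsilon>lb_i$ (the same $\epsilon$ choices being used on both sides of the displayed identity). *)

(* Defs.v *)
From HB Require Import structures.
From mathcomp Require Import all_boot all_order all_algebra.
From mathcomp Require Import constructive_ereal.
Set Implicit Arguments. Unset Strict Implicit. Unset Printing Implicit Defensive.
Import Order.TTheory GRing.Theory Num.Theory.
Local Open Scope ring_scope.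

(* A linear constraint  sum_{k=1}^D w_k x_k + b |> 0.  Coordinates are indexed
   1..D (as in the paper); points of R^D are functions nat -> R of which only
   the values at 1..D matter. *)
Record constr (R : realFieldType) := Constr {
  cw : nat -> R;
  cb : R;
  cstrict : bool }.     (* true: '>' ; false: '>=' *)

Definition cval (R : realFieldType) (D : nat) (phi : constr R) (x : nat -> R) : R :=
  \sum_(1 <= k < D.+1) cw phi k * x k + cb phi.

Definition sat (R : realFieldType) (D : nat) (x : nat -> R) (phi : constr R) : bool :=
  if cstrict phi then 0 < cval D phi x else 0 <= cval D phi x.

Definition satisfiable (R : realFieldType) (D : nat) (Pi : seq (constr R)) : Prop :=
  exists x : nat -> R, all (sat D x) Pi.

Definition posj (R : realFieldType) (j : nat) (G : seq (constr R)) :=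
  [seq phi <- G | 0 < cw phi j].
Definition negj (R : realFieldType) (j : nat) (G : seq (constr R)) :=
  [seq phi <- G | cw phi j < 0].

Definition red (R : realFieldType) (j : nat) (phi1 phi2 : constr R) : constr R :=
  Constr (fun k => if k == j then 0
                   else cw phi1 k * `|cw phi2 j| + cw phi2 k * `|cw phi1 j|)
         (cb phi1 * `|cw phi2 j| + cb phi2 * `|cw phi1 j|)
         (cstrict phi1 || cstrict phi2).

(* Pi_i = (Pi_j \ (Pi_j^- u Pi_j^+)) u { red_j phi1 phi2 }, j = i+1 *)
Definition elim (R : realFieldType) (j : nat) (G : seq (constr R)) : seq (constr R) :=
  [seq phi <- G | cw phi j == 0] ++
  [seq red j phi1 phi2 | phi1 <- negj j G, phi2 <- posj j G].

(* PiAux n = Pi_{D-n} *)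
Fixpoint PiAux (R : realFieldType) (D : nat) (Pi : seq (constr R)) (n : nat)
  : seq (constr R) :=
  match n with
  | 0 => Pi
  | n'.+1 => elim (D - n') (PiAux D Pi n')
  end.

Definition PiI (R : realFieldType) (D : nat) (Pi : seq (constr R)) (i : nat) :=
  PiAux D Pi (D - i).

Definition epsc (R : realFieldType) (D : nat) (i : nat) (phi : constr R)
  (y : nat -> R) : R :=
  - \sum_(1 <= k < D.+1 | k != i) (cw phi k / cw phi i) * y k - cb phi / cw phi i.

(* lb_i and ub_i, evaluated at the point y (the already computed prefix) *)
Definition lbI (R : realFieldType) (D : nat) (Pi : seq (constr R)) (i : nat)
  (y : nat -> R) : \bar R :=
  \big[Order.max/-oo%E]_(phi <- posj i (PiI D Pi i)) (epsc D i phi y)%:E.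
Definition ubI (R : realFieldType) (D : nat) (Pi : seq (constr R)) (i : nat)
  (y : nat -> R) : \bar R :=
  \big[Order.min/+oo%E]_(phi <- negj i (PiI D Pi i)) (epsc D i phi y)%:E.

Definition rmaxe (R : realFieldType) (a : R) (l : \bar R) : R :=
  match l with | r%:E => Num.max a r | +oo%E => a | -oo%E => a end.
Definition rmine (R : realFieldType) (a : R) (u : \bar R) : R :=
  match u with | r%:E => Num.min a r | +oo%E => a | -oo%E => a end.

Definition maxI (R : realFieldType) (D : nat) (Pi : seq (constr R)) (i : nat)
  (y : nat -> R) (e a : R) : R :=
  let v := rmaxe a (lbI D Pi i y) in
  if has (fun phi => cstrict phi && (v == epsc D i phi y)) (posj i (PiI D Pi i))
  then v + e else v.

Definition minI (R : realFieldType) (D : nat) (Pi : seq (constr R)) (i : nat)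
  (y : nat -> R) (e a : R) : R :=
  let u := rmine a (ubI D Pi i y) in
  if has (fun phi => cstrict phi && (u == epsc D i phi y)) (negj i (PiI D Pi i))
  then u - e else u.

(* clpre n : the vector (CL_1, ..., CL_n, 0, 0, ...); epsL i / epsU i are the
   epsilons chosen for max^i / min^i at coordinate i. *)
Fixpoint clpre (R : realFieldType) (D : nat) (Pi : seq (constr R)) (xt : nat -> R)
  (epsL epsU : nat -> R) (n : nat) : nat -> R :=
  match n with
  | 0 => fun _ => 0
  | n'.+1 =>
      let p := clpre D Pi xt epsL epsU n' in
      let v := minI D Pi n'.+1 p (epsU n'.+1) (maxI D Pi n'.+1 p (epsL n'.+1) (xt n'.+1)) in
      fun k => if k == n'.+1 then v else p k
  end.

Definition CL (R : realFieldType) (D : nat) (Pi : seq (constr R)) (xt : nat -> R)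
  (epsL epsU : nat -> R) : nat -> R :=
  clpre D Pi xt epsL epsU D.

Definition eps_ok (R : realFieldType) (D : nat) (Pi : seq (constr R)) (xt : nat -> R)
  (epsL epsU : nat -> R) : Prop :=
  forall i, (1 <= i <= D)%N ->
    let p := clpre D Pi xt epsL epsU i.-1 in
    let lb := lbI D Pi i p in
    let ub := ubI D Pi i p in
    0 < epsL i /\ 0 < epsU i /\
    ((lb < ub)%E -> (lb + (epsL i)%:E < ub)%E /\ (lb < ub - (epsU i)%:E)%E).

(* Main.v *)
Require Import Defs.
From HB Require Import structures.
From mathcomp Require Import all_boot all_order all_algebra.
From mathcomp Require Import constructive_ereal.
From mathcomp Require Import ring lra zify.
Import Order.TTheory GRing.Theory Num.Theory.
Local Open Scope ring_scope.
Set Implicit Arguments. Unset Strict Implicit.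


Section BigE.
Context {R : realFieldType} {T : Type}.
Implicit Types (s : seq T) (F : T -> \bar R).

Lemma bmax_leE s F y :
  (\big[Order.max/-oo%E]_(x <- s) F x <= y)%E = all (fun x => F x <= y)%E s.
Proof. by elim: s => [|x s IH]; rewrite ?big_nil ?big_cons ?leNye //= ge_max IH. Qed.

Lemma bmax_ltE s F (r : R) :
  (\big[Order.max/-oo%E]_(x <- s) F x < r%:E)%E = all (fun x => F x < r%:E)%E s.
Proof. by elim: s => [|x s IH]; rewrite ?big_nil ?big_cons ?ltNyr //= gt_max IH. Qed.

Lemma le_bmax s F x : List.In x s -> (F x <= \big[Order.max/-oo%E]_(x <- s) F x)%E.
Proof.
elim: s => [|y s IH] //= [->|/IH h]; rewrite big_cons le_max ?lexx //.
by rewrite h orbT.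
Qed.

Lemma bmax_cases s F : \big[Order.max/-oo%E]_(x <- s) F x = -oo%E \/
  exists2 x, List.In x s & \big[Order.max/-oo%E]_(x <- s) F x = F x.
Proof.
elim: s => [|x s IH]; first by left; rewrite big_nil.
rewrite big_cons; set b := \big[_/_]_(_ <- s) _ in IH *; case: (leP (F x) b) => _.
  case: IH => [->|[y ys ->]]; [by left|].
  by right; exists y => //=; right.
by right; exists x => //=; left.
Qed.

Lemma le_bminE s F y :
  (y <= \big[Order.min/+oo%E]_(x <- s) F x)%E = all (fun x => y <= F x)%E s.
Proof. by elim: s => [|x s IH]; rewrite ?big_nil ?big_cons ?leey //= le_min IH. Qed.

Lemma lt_bminE s F (r : R) :
  (r%:E < \big[Order.min/+oo%E]_(x <- s) F x)%E = all (fun x => r%:E < F x)%E s.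
Proof. by elim: s => [|x s IH]; rewrite ?big_nil ?big_cons ?ltry //= lt_min IH. Qed.

Lemma bmin_le s F x : List.In x s -> (\big[Order.min/+oo%E]_(x <- s) F x <= F x)%E.
Proof.
elim: s => [|y s IH] //= [->|/IH h]; rewrite big_cons ge_min ?lexx //.
by rewrite h orbT.
Qed.

Lemma bmin_cases s F : \big[Order.min/+oo%E]_(x <- s) F x = +oo%E \/
  exists2 x, List.In x s & \big[Order.min/+oo%E]_(x <- s) F x = F x.
Proof.
elim: s => [|x s IH]; first by left; rewrite big_nil.
rewrite big_cons; set b := \big[_/_]_(_ <- s) _ in IH *; case: (leP (F x) b) => _.
  by right; exists x => //=; left.
case: IH => [->|[y ys ->]]; [by left|].
by right; exists y => //=; right.
Qed.
End BigE.

Definition mxg (R : realFieldType) (L : \bar R) (sP : R -> bool) (e a : R) : R :=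
  let v := rmaxe a L in if sP v then v + e else v.
Definition mng (R : realFieldType) (U : \bar R) (sN : R -> bool) (e a : R) : R :=
  let u := rmine a U in if sN u then u - e else u.

Arguments mxg {R}. Arguments mng {R}.
Record core_hyp (R : realFieldType) (L U : \bar R) (sP sN : R -> bool) (e e' : R) : Prop := CoreHyp {
  hL : L <> +oo%E; hU : U <> -oo%E; hLU : (L <= U)%E;
  hP1 : forall x, sP x -> (x%:E <= L)%E; hP2 : forall x, sP x -> (x%:E < U)%E;
  hN1 : forall x, sN x -> (U <= x%:E)%E; hN2 : forall x, sN x -> (L < x%:E)%E;
  he : 0 < e; he' : 0 < e';
  heps : (L < U)%E -> (L + e%:E < U)%E /\ (L < U - e'%:E)%E }.
Lemma rmaxe_ge (R : realFieldType) (L : \bar R) a : L <> +oo%E ->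
  (L <= (rmaxe a L)%:E)%E /\ a <= rmaxe a L.
Proof.
case: L => [r||] //= _; last by rewrite leNye lexx.
by rewrite lee_fin !le_max !lexx orbT.
Qed.

Lemma rmine_le (R : realFieldType) (U : \bar R) a : U <> -oo%E ->
  ((rmine a U)%:E <= U)%E /\ rmine a U <= a.
Proof.
case: U => [r||] //= _; last by rewrite leey lexx.
by rewrite lee_fin !ge_min !lexx orbT.
Qed.

Lemma rmaxe_mid (R : realFieldType) (L : \bar R) a : (L < a%:E)%E -> rmaxe a L = a.
Proof. by case: L => [r||] //=; rewrite lte_fin => ?; rewrite max_l // ltW. Qed.

Lemma rmine_mid (R : realFieldType) (U : \bar R) a : (a%:E < U)%E -> rmine a U = a.
Proof. by case: U => [r||] //=; rewrite lte_fin => ?; rewrite min_l // ltW. Qed.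

Lemma mxg_mid (R : realFieldType) (L U : \bar R) (sP sN : R -> bool) (e e' : R) (H : core_hyp L U sP sN e e') a : (L < a%:E)%E -> mxg L sP e a = a.
Proof.
have [hL hU hLU hP1 hP2 hN1 hN2 he he' heps] := H.
move=> La; rewrite /mxg rmaxe_mid //; case: ifP => // /hP1; rewrite leNgt La //.
Qed.

Lemma mng_mid (R : realFieldType) (L U : \bar R) (sP sN : R -> bool) (e e' : R) (H : core_hyp L U sP sN e e') a : (a%:E < U)%E -> mng U sN e' a = a.
Proof.
have [hL hU hLU hP1 hP2 hN1 hN2 he he' heps] := H.
move=> La; rewrite /mng rmine_mid //; case: ifP => // /hN1; rewrite leNgt La //.
Qed.

Lemma mxg_low (R : realFieldType) (L U : \bar R) (sP sN : R -> bool) (e e' : R) (H : core_hyp L U sP sN e e') l a : L = l%:E -> a <= l -> mxg L sP e a = mxg L sP e l.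
Proof. by move=> -> al; rewrite /mxg /= max_r // maxxx. Qed.

Lemma mng_low (R : realFieldType) (L U : \bar R) (sP sN : R -> bool) (e e' : R) (H : core_hyp L U sP sN e e') u a : U = u%:E -> u <= a -> mng U sN e' a = mng U sN e' u.
Proof. by move=> -> al; rewrite /mng /= min_r // minxx. Qed.

Lemma core_comm (R : realFieldType) (L U : \bar R) (sP sN : R -> bool) (e e' : R) (H : core_hyp L U sP sN e e') a : mng U sN e' (mxg L sP e a) = mxg L sP e (mng U sN e' a).
Proof.
have [hL hU hLU hP1 hP2 hN1 hN2 he he' heps] := H.
have := hLU; rewrite le_eqVlt => /orP [/eqP LU|LU].
  have [m Lm] : exists m, L = m%:E.
    case EL: L hL => [r||] // _; [by exists r| by move: hU; rewrite -LU EL].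
  have Um : U = m%:E by rewrite -LU.
  have X b : mxg L sP e b = Num.max b m.
    rewrite /mxg Lm /=; case: ifP => // /hP2; rewrite Um lte_fin.
    by rewrite ltNge le_max lexx orbT.
  have Y b : mng U sN e' b = Num.min b m.
    rewrite /mng Um /=; case: ifP => // /hN2; rewrite Lm lte_fin.
    by rewrite ltNge ge_min lexx orbT.
  rewrite X Y X Y; case: (leP a m) => am.
    by rewrite min_l // max_r.
  by rewrite min_r ?ltW // max_r.
have [epsl epsu] := heps LU.
case: (leP (a%:E) L) => aL.
  have [l Ll] : exists l, L = l%:E.
    by case EL: L aL hL => [r||] //; exists r.
  have al : a <= l by rewrite -lee_fin -Ll.
  rewrite (mxg_low H Ll al) (mng_mid H (le_lt_trans aL LU)) (mxg_low H Ll al).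
  apply: (mng_mid H); rewrite /mxg Ll /= maxxx; case: ifP => _.
    by rewrite EFinD -Ll.
  by rewrite -Ll.
case: (leP U (a%:E)) => Ua.
  have [u Uu] : exists u, U = u%:E.
    by case EU: U Ua hU => [r||] //; exists r.
  have ua : u <= a by rewrite -lee_fin -Uu.
  rewrite (mxg_mid H (lt_le_trans LU Ua)) (mng_low H Uu ua).
  apply/esym/(mxg_mid H); rewrite /mng Uu /= minxx; case: ifP => _.
    by rewrite EFinB -Uu.
  by rewrite -Uu.
by rewrite (mxg_mid H aL) (mng_mid H Ua) (mxg_mid H aL).
Qed.

Lemma core_pos (R : realFieldType) (L U : \bar R) (sP sN : R -> bool) (e e' : R) (H : core_hyp L U sP sN e e') a fp (s : bool) :
  (fp%:E <= L)%E -> (s -> (fp%:E < U)%E) -> (s -> sP fp) ->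
  fp <= mng U sN e' (mxg L sP e a) /\ (s -> fp < mng U sN e' (mxg L sP e a)).
Proof.
have [hL hU hLU hP1 hP2 hN1 hN2 he he' heps] := H.
move=> fL fU fs.
set w := mxg L sP e a.
have [c1 c2] : fp <= w /\ (s -> fp < w).
  rewrite /w /mxg; have [vL _] := rmaxe_ge a hL; set v := rmaxe a L in vL *.
  have fv : fp <= v by rewrite -lee_fin (le_trans fL vL).
  case: ifP => Hv.
    by split => [|_]; lra.
  split => // /fs Hf; rewrite lt_neqAle fv andbT.
  by apply/negP => /eqP E; rewrite -E Hf in Hv.
rewrite /mng; have [uU uw] := rmine_le w hU; set u := rmine w U in uU uw *.
case: ifP => Hu.
  have E : U = u%:E by apply/eqP; rewrite eq_le uU hN1.
  have Lu := hN2 _ Hu; rewrite -E in Lu.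
  have [_ ] := heps Lu; rewrite E -EFinB => H2.
  have : (fp%:E < (u - e')%:E)%E by apply: le_lt_trans H2.
  by rewrite lte_fin => H3; split => [|_]; apply: ltW || idtac; lra.
move: uU; rewrite /u; case EU: U fU hLU => [r||] /= fU hLU' _; try by split.
  case: (leP w r) => wr; first by split.
  have fr : fp <= r by rewrite -lee_fin (le_trans fL).
  by split => // /fU; rewrite lte_fin.
Qed.

Lemma core_neg (R : realFieldType) (L U : \bar R) (sP sN : R -> bool) (e e' : R) (H : core_hyp L U sP sN e e') b fp (s : bool) :
  (U <= fp%:E)%E -> (s -> sN fp) ->
  mng U sN e' b <= fp /\ (s -> mng U sN e' b < fp).
Proof.
have [hL hU hLU hP1 hP2 hN1 hN2 he he' heps] := H.
move=> Uf fs.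
rewrite /mng; have [uU _] := rmine_le b hU; set u := rmine b U in uU *.
have uf : u <= fp by rewrite -lee_fin (le_trans uU Uf).
case: ifP => Hu.
  by split => [|_]; lra.
split => // /fs Hf; rewrite lt_neqAle uf andbT.
by apply/negP => /eqP E; rewrite E Hf in Hu.
Qed.


Section Lists.
Context {T U : Type}.
Lemma In_all (p : pred T) s : all p s <-> forall x, List.In x s -> p x.
Proof.
elim: s => [|y s IH] /=; first by split.
split.
  by move=> /andP [py /IH h] x [<-|/h].
by move=> h; rewrite h /=; [apply/IH => x hx; apply: h; right|left].
Qed.

Lemma In_has (p : pred T) s : has p s <-> exists x, List.In x s /\ p x.
Proof.
elim: s => [|y s IH] /=; first by split => // [[x []]].
split.
  case/orP => [py|/IH [x [hx px]]]; [by exists y; split => //; left|].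
  by exists x; split => //; right.
move=> [x [[<-|hx] px]]; first by rewrite px.
by apply/orP; right; apply/IH; exists x.
Qed.

Lemma In_filter (p : pred T) s x : List.In x [seq y <- s | p y] <-> p x /\ List.In x s.
Proof.
elim: s => [|y s IH] /=; first by split => // [[]].
case: ifP => py /=.
  split; first by case=> [<-|/IH [? ?]]; split => //; [left|right].
  by case=> px /= [->|hx]; [left|right; apply/IH].
split; first by move=> /IH [? ?]; split => //; right.
by case=> px /= [E|hx]; [rewrite E px in py|apply/IH].
Qed.

Lemma In_cat s1 s2 (x : T) : List.In x (s1 ++ s2) <-> List.In x s1 \/ List.In x s2.
Proof.
elim: s1 => [|y s IH] /=; tauto.
Qed.

Lemma In_map (f : T -> U) s z : List.In z (map f s) <-> exists x, List.In x s /\ z = f x.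
Proof.
elim: s z => [|y s IH] z /=; first by split => // [[x []]].
split.
  case=> [E|H]; first by exists y; split => //; left.
  by have [x [hx ->]] := proj1 (IH z) H; exists x; split => //; right.
by case=> x [[<-|hx] ->]; [left|right; apply/IH; exists x].
Qed.
End Lists.

Lemma In_allpairs (S T U : Type) (f : S -> T -> U) s t z :
  List.In z [seq f x y | x <- s, y <- t] <->
  exists x y, [/\ List.In x s, List.In y t & z = f x y].
Proof.
elim: s z => [|x s IH] z /=; first by split => // [[x [y [[]]]]].
rewrite In_cat; split.
  case=> [/In_map [y [hy ->]]|/IH [x' [y [hx hy ->]]]]; first by exists x, y; split => //; left.
  by exists x', y; split => //; right.
case=> x' [y [[<-|hx] hy ->]]; first by left; apply/In_map; exists y.
by right; apply/IH; exists x', y.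
Qed.

Lemma seq_core (R : realFieldType) (P N : seq (constr R)) (f : constr R -> R) (e e' : R) :
  (forall phi psi, List.In phi P -> List.In psi N ->
     f phi <= f psi /\ (cstrict phi || cstrict psi -> f phi < f psi)) ->
  0 < e -> 0 < e' ->
  ((\big[Order.max/-oo%E]_(phi <- P) (f phi)%:E < \big[Order.min/+oo%E]_(phi <- N) (f phi)%:E)%E ->
   (\big[Order.max/-oo%E]_(phi <- P) (f phi)%:E + e%:E < \big[Order.min/+oo%E]_(phi <- N) (f phi)%:E)%E /\
   (\big[Order.max/-oo%E]_(phi <- P) (f phi)%:E < \big[Order.min/+oo%E]_(phi <- N) (f phi)%:E - e'%:E)%E) ->
  core_hyp (\big[Order.max/-oo%E]_(phi <- P) (f phi)%:E)
           (\big[Order.min/+oo%E]_(phi <- N) (f phi)%:E)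
           (fun v => has (fun phi => cstrict phi && (v == f phi)) P)
           (fun v => has (fun phi => cstrict phi && (v == f phi)) N) e e'.
Proof.
move=> FM he he' heps; split => //.
- by case: (bmax_cases P (fun phi => (f phi)%:E)) => [->|[x _ ->]].
- by case: (bmin_cases N (fun phi => (f phi)%:E)) => [->|[x _ ->]].
- rewrite bmax_leE; apply/In_all => phi Hp; rewrite le_bminE; apply/In_all => psi Hn.
  by rewrite lee_fin; exact: (FM _ _ Hp Hn).1.
- move=> x /In_has [phi [Hp /andP [_ /eqP ->]]]; exact: le_bmax.
- move=> x /In_has [phi [Hp /andP [sp /eqP ->]]]; rewrite lt_bminE.
  apply/In_all => psi Hn; rewrite lte_fin; apply: (FM _ _ Hp Hn).2; by rewrite sp.
- move=> x /In_has [phi [Hp /andP [_ /eqP ->]]]; exact: bmin_le.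
- move=> x /In_has [psi [Hn /andP [sp /eqP ->]]]; rewrite bmax_ltE.
  apply/In_all => phi Hp; rewrite lte_fin; apply: (FM _ _ Hp Hn).2; by rewrite sp orbT.
Qed.

Lemma cw_red (R : realFieldType) j (a b : constr R) k :
  cw a j < 0 -> 0 < cw b j ->
  cw (red j a b) k = cw a k * `|cw b j| + cw b k * `|cw a j|.
Proof.
move=> ha hb; rewrite /=; case: eqP => [->|] //.
rewrite gtr0_norm // ltr0_norm //; ring.
Qed.

Lemma cval_red (R : realFieldType) D j (a b : constr R) x :
  cw a j < 0 -> 0 < cw b j ->
  cval D (red j a b) x = `|cw b j| * cval D a x + `|cw a j| * cval D b x.
Proof.
move=> ha hb; rewrite /cval.
rewrite (eq_bigr (fun k => `|cw b j| * (cw a k * x k) + `|cw a j| * (cw b k * x k))); last first.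
  by move=> k _; rewrite cw_red //; ring.
rewrite big_split /= -!mulr_sumr /=; ring.
Qed.

Lemma sat_elim (R : realFieldType) D j (G : seq (constr R)) x :
  all (sat D x) G -> all (sat D x) (elim j G).
Proof.
move=> /In_all H; apply/In_all => phi /In_cat [/In_filter [_ /H]//|].
move=> /In_allpairs [a [b [/In_filter [ha aG] /In_filter [hb bG] ->]]].
have := H a aG; have := H b bG; rewrite /sat cval_red //= gtr0_norm // ltr0_norm //.
case: (cstrict a); case: (cstrict b) => /= h1 h2; nra.
Qed.

Lemma sat_PiAux (R : realFieldType) D (Pi : seq (constr R)) x :
  all (sat D x) Pi -> forall m, all (sat D x) (PiAux D Pi m).
Proof. by move=> H; elim=> [|m IH] //=; apply: sat_elim. Qed.

Lemma zero_PiAux (R : realFieldType) D (Pi : seq (constr R)) m phi k :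
  List.In phi (PiAux D Pi m) -> (D - m < k <= D)%N -> cw phi k = 0.
Proof.
elim: m phi => [|m IH] phi /=; first by lia.
move=> /In_cat [/In_filter [/eqP h hp]|].
  move=> hk; case: (k =P D - m)%N => [->//|ne]; apply: (IH _ hp); lia.
move=> /In_allpairs [a [b [/In_filter [ha aG] /In_filter [hb bG] ->]]] hk /=.
case: eqP => // ne; rewrite (IH a) ?(IH b) //; [ring|lia|lia].
Qed.

Lemma cval_const (R : realFieldType) D (phi : constr R) x :
  (forall k, (1 <= k <= D)%N -> cw phi k = 0) -> cval D phi x = cb phi.
Proof.
move=> H; rewrite /cval big_seq big1 ?add0r // => k; rewrite mem_index_iota => hk.
by rewrite H ?mul0r //; lia.
Qed.

Lemma epsc_ext (R : realFieldType) D i (phi : constr R) y y' :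
  (forall k, k != i -> y k = y' k) -> epsc D i phi y = epsc D i phi y'.
Proof.
by move=> H; rewrite /epsc; congr (- _ - _); apply: eq_bigr => k hk; rewrite H.
Qed.

Lemma cval_eps (R : realFieldType) D i (phi : constr R) y :
  (1 <= i <= D)%N -> cw phi i != 0 ->
  cval D phi y = cw phi i * (y i - epsc D i phi y).
Proof.
move=> hi hw; rewrite /cval /epsc (bigD1_seq i) /=; last first.
- by rewrite /index_iota iota_uniq.
- by rewrite mem_index_iota; lia.
have -> : \sum_(k <- index_iota 1 D.+1 | k != i) cw phi k / cw phi i * y k =
   (\sum_(k <- index_iota 1 D.+1 | k != i) cw phi k * y k) / cw phi i.
  by rewrite mulr_suml; apply: eq_bigr => k _; rewrite mulrAC.
by field.
Qed.

Lemma fm_pair (R : realFieldType) D i (a b : constr R) p :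
  (1 <= i <= D)%N -> cw a i < 0 -> 0 < cw b i -> sat D p (red i a b) ->
  epsc D i b p <= epsc D i a p /\
  (cstrict b || cstrict a -> epsc D i b p < epsc D i a p).
Proof.
move=> hi ha hb; rewrite /sat cval_red // (cval_eps _ hi (ltr0_neq0 ha)) (cval_eps _ hi (lt0r_neq0 hb)).
rewrite gtr0_norm // ltr0_norm //.
set ea := epsc D i a p; set eb := epsc D i b p.
have -> : cw b i * (cw a i * (p i - ea)) + - cw a i * (cw b i * (p i - eb)) =
  (- cw a i * cw b i) * (ea - eb) by ring.
have pos : 0 < - cw a i * cw b i by rewrite mulr_gt0 // oppr_gt0.
rewrite /= [cstrict b || _]orbC; case: (cstrict a || cstrict b).
  by rewrite pmulr_rgt0 // subr_gt0 => h; split => //; apply: ltW.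
by rewrite pmulr_rge0 // subr_ge0 => h; split.
Qed.


Lemma PiI_step (R : realFieldType) D (Pi : seq (constr R)) n :
  (n < D)%N -> PiI D Pi n = elim n.+1 (PiI D Pi n.+1).
Proof.
move=> hn; rewrite /PiI.
have -> : (D - n = (D - n.+1).+1)%N by lia.
rewrite /=; congr (elim _ _); lia.
Qed.

Definition sPf (R : realFieldType) D (Pi : seq (constr R)) i y :=
  fun v => has (fun phi => cstrict phi && (v == epsc D i phi y)) (posj i (PiI D Pi i)).
Definition sNf (R : realFieldType) D (Pi : seq (constr R)) i y :=
  fun v => has (fun phi => cstrict phi && (v == epsc D i phi y)) (negj i (PiI D Pi i)).

Lemma core_at (R : realFieldType) D (Pi : seq (constr R)) xt epsL epsU n :
  (n < D)%N -> eps_ok D Pi xt epsL epsU ->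
  all (sat D (clpre D Pi xt epsL epsU n)) (PiI D Pi n) ->
  let p := clpre D Pi xt epsL epsU n in
  core_hyp (lbI D Pi n.+1 p) (ubI D Pi n.+1 p) (sPf D Pi n.+1 p) (sNf D Pi n.+1 p)
           (epsL n.+1) (epsU n.+1).
Proof.
move=> hn He Hs p.
have [e1 [e2 heps]] : 0 < epsL n.+1 /\ 0 < epsU n.+1 /\
   ((lbI D Pi n.+1 p < ubI D Pi n.+1 p)%E ->
    (lbI D Pi n.+1 p + (epsL n.+1)%:E < ubI D Pi n.+1 p)%E /\
    (lbI D Pi n.+1 p < ubI D Pi n.+1 p - (epsU n.+1)%:E)%E).
  by have := He n.+1; rewrite /=; apply; lia.
move: heps; rewrite /lbI /ubI /sPf /sNf => heps.
apply: (seq_core (f := fun phi => epsc D n.+1 phi p)) => //.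
move=> phi psi /In_filter [hphi Gphi] /In_filter [hpsi Gpsi].
move: Hs; rewrite (PiI_step Pi hn) => /In_all Hs.
have Hr : sat D p (red n.+1 psi phi).
  apply: Hs; apply/In_cat; right; apply/In_allpairs; exists psi, phi; split => //.
    by apply/In_filter.
  by apply/In_filter.
have := fm_pair (D := D) _ hpsi hphi Hr; rewrite orbC; apply; lia.
Qed.

Lemma inv_all (R : realFieldType) D (Pi : seq (constr R)) xt epsL epsU :
  satisfiable D Pi -> eps_ok D Pi xt epsL epsU ->
  forall n, (n <= D)%N -> all (sat D (clpre D Pi xt epsL epsU n)) (PiI D Pi n).
Proof.
move=> [x Hx] He; elim=> [|n IH] hn.
  rewrite /PiI subn0; have /In_all H := sat_PiAux Hx D.
  apply/In_all => phi hphi.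
  have Z k : (1 <= k <= D)%N -> cw phi k = 0.
    by move=> hk; apply: (zero_PiAux hphi); lia.
  by move: (H phi hphi); rewrite /sat !(cval_const _ Z).
have hn' : (n < D)%N by [].
have IH' := IH (ltnW hn').
have C := core_at hn' He IH'.
set p := clpre D Pi xt epsL epsU n in IH' C.
set b := maxI D Pi n.+1 p (epsL n.+1) (xt n.+1).
set c := minI D Pi n.+1 p (epsU n.+1) b.
have Ec : clpre D Pi xt epsL epsU n.+1 = fun k => if k == n.+1 then c else p k by [].
have Ec2 : c = mng (ubI D Pi n.+1 p) (sNf D Pi n.+1 p) (epsU n.+1)
                  (mxg (lbI D Pi n.+1 p) (sPf D Pi n.+1 p) (epsL n.+1) (xt n.+1)) by [].
have hi : (1 <= n.+1 <= D)%N by lia.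
rewrite Ec; apply/In_all => phi hphi.
have Eeps : epsc D n.+1 phi (fun k => if k == n.+1 then c else p k) = epsc D n.+1 phi p.
  by apply: epsc_ext => k hk; rewrite (negbTE hk).
set fp := epsc D n.+1 phi p in Eeps.
case: (ltgtP (cw phi n.+1) 0) => hw.
- have h1 : (ubI D Pi n.+1 p <= fp%:E)%E.
    by rewrite /ubI; apply: bmin_le; apply/In_filter.
  have h2 : cstrict phi -> sNf D Pi n.+1 p fp.
    move=> sp; apply/In_has; exists phi; split; first by apply/In_filter.
    by rewrite sp eqxx.
  have [c1 c2] := core_neg C (mxg (lbI D Pi n.+1 p) (sPf D Pi n.+1 p) (epsL n.+1) (xt n.+1)) h1 h2.
  rewrite -Ec2 in c1 c2.
  rewrite /sat (cval_eps _ hi (ltr0_neq0 hw)) Eeps /= eqxx.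
  case: (cstrict phi) c2 => /= c2; [have := c2 isT => c3; nra|nra].
- have h3 : cstrict phi -> sPf D Pi n.+1 p fp.
    move=> sp; apply/In_has; exists phi; split; first by apply/In_filter.
    by rewrite sp eqxx.
  have h1 : (fp%:E <= lbI D Pi n.+1 p)%E.
    by rewrite /lbI; apply: le_bmax; apply/In_filter.
  have h2 : cstrict phi -> (fp%:E < ubI D Pi n.+1 p)%E.
    by move=> sp; apply: (hP2 C); apply: h3.
  have [c1 c2] := core_pos C (xt n.+1) h1 h2 h3.
  rewrite -Ec2 in c1 c2.
  rewrite /sat (cval_eps _ hi (lt0r_neq0 hw)) Eeps /= eqxx.
  case: (cstrict phi) c2 => /= c2; [have := c2 isT => c3; nra|nra].
- have : sat D p phi.
    move: IH'; rewrite (PiI_step Pi hn') => /In_all; apply.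
    by apply/In_cat; left; apply/In_filter; rewrite hw eqxx.
  have E : cval D phi (fun k => if k == n.+1 then c else p k) = cval D phi p.
    rewrite /cval; congr (_ + _); apply: eq_bigr => k _.
    by case: eqP => [->|]; rewrite ?hw ?mul0r.
  by rewrite /sat E.
Qed.

Lemma clpre_stable (R : realFieldType) D (Pi : seq (constr R)) xt epsL epsU d n k :
  (k <= n)%N -> clpre D Pi xt epsL epsU (n + d) k = clpre D Pi xt epsL epsU n k.
Proof.
move=> hk; elim: d => [|d IH]; first by rewrite addn0.
rewrite addnS /=; case: eqP => [E|_] //; lia.
Qed.

Unset Implicit Arguments.
Theorem corollary1 (R : realFieldType) (D : nat) (Pi : seq (constr R)) :
  satisfiable D Pi ->
  forall (xt : nat -> R) (epsL epsU : nat -> R),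
    eps_ok D Pi xt epsL epsU ->
    forall i : nat, (1 <= i <= D)%N ->
      let p := clpre D Pi xt epsL epsU i.-1 in
      (lbI D Pi i p <= ubI D Pi i p)%E /\
      CL D Pi xt epsL epsU i
        = minI D Pi i p (epsU i) (maxI D Pi i p (epsL i) (xt i)) /\
      CL D Pi xt epsL epsU i
        = maxI D Pi i p (epsL i) (minI D Pi i p (epsU i) (xt i)).
Proof.
move=> Hs xt epsL epsU He [//|n] /andP [_ hn] p.
have C := core_at hn He (inv_all Hs He (ltnW hn)).
have ECL : CL D Pi xt epsL epsU n.+1 =
    minI D Pi n.+1 p (epsU n.+1) (maxI D Pi n.+1 p (epsL n.+1) (xt n.+1)).
  have E := @clpre_stable R D Pi xt epsL epsU (D - n.+1) n.+1 n.+1 (leqnn _).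
  by rewrite subnKC // in E; rewrite /CL E /= eqxx.
split; first exact: (hLU C).
split => //; rewrite ECL; exact: (core_comm C).
Qed.
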